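(* Among the exposure metrics $ED, ER, DTD, DTR, DID, DIR$, exactly $ED$, $DTD$ and $DID$ satisfy optimality of random rankings: for every population $\mathcal D$ with uniform relevance, if $r$ is drawn uniformly at random from the set of all rankings of the full population $\mathcal D$, then $\mathbb E[m(r)]=v_{\mathrm{opt}}(m)$. In particular $ER$, $DTR$ and $DIR$ do not satisfy this property.
   Context: A population is a finite set $\mathcal{D}$ of candidates partitioned into two nonempty groups, a non-protected group $G_0$ and a protected group $G_1$; each candidate $d$ has a relevance score $y(d)\in\mathbb R$; uniform relevance means $y(d)=1$ for all $d$. For a candidate set $D\subseteq\mathcal D$ with $n=|D|$, a ranking is a bijection $r:\{1,\dots,n\}\to D$ and $r^{-1}(d)$ is the position of $d$. Position bias $b(k)=1/\log_2(k+1)$. For $G\in\{G_0,G_1\}$: $\mathrm{Exposure}(G|r)=\frac{1}{|G|}\sum_{d\in G\cap D} b(r^{-1}(d))$, $Y(G)=\frac1{|G|}\sum_{d\in G}y(d)$, $CTR(G|r)=\frac1{|G|}\sum_{d\in G\cap D} b(r^{-1}(d))\,y(d)$. $ED(r)=\mathrm{Exposure}(G_1|r)-\mathrm{Exposure}(G_0|r)$, $ER(r)=\mathrm{Exposure}(G_1|r)/\mathrm{Exposure}(G_0|r)$, $DTD(r)=\frac{\mathrm{Exposure}(G_1|r)}{Y(G_1)}-\frac{\mathrm{Exposure}(G_0|r)}{Y(G_0)}$, $DTR(r)=\frac{\mathrm{Exposure}(G_1|r)}{\mathrm{Exposure}(G_0|r)}\cdot\frac{Y(G_0)}{Y(G_1)}$,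 $DID(r)=\frac{CTR(G_1|r)}{Y(G_1)}-\frac{CTR(G_0|r)}{Y(G_0)}$, $DIR(r)=\frac{CTR(G_1|r)}{CTR(G_0|r)}\cdot\frac{Y(G_0)}{Y(G_1)}$. Optimal values: $v_{\mathrm{opt}}=0$ for $ED,DTD,DID$ and $v_{\mathrm{opt}}=1$ for $ER,DTR,DIR$. *)

(* Defs.v *)
From HB Require Import structures.
From mathcomp Require Import all_boot all_order all_algebra.
From mathcomp Require Import reals exp.
Set Implicit Arguments. Unset Strict Implicit. Unset Printing Implicit Defensive.
Import Order.TTheory GRing.Theory Num.Theory.
Local Open Scope ring_scope.

Section Fairness.
Variable R : realType.

Definition log2 (x : R) : R := ln x / ln 2.
Definition bias (k : nat) : R := 1 / log2 k.+1%:R.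

(* A population is a finite type T with a group indicator g:
   G1 (protected) = [set d | g d], G0 (non-protected) = [set d | ~~ g d].
   A ranking of the full population is a bijection r : 'I_#|T| -> T;
   r i is the candidate at position i.+1 (so r^{-1}(d) = position). *)
Definition ranking (T : finType) := {ffun 'I_#|T| -> T}.
Definition is_ranking (T : finType) (r : ranking T) : bool := injectiveb r.

Definition G1 (T : finType) (g : T -> bool) : {set T} := [set d | g d].
Definition G0 (T : finType) (g : T -> bool) : {set T} := [set d | ~~ g d].

Definition Exposure (T : finType) (G : {set T}) (r : ranking T) : R :=
  (#|G|%:R)^-1 * \sum_(i : 'I_#|T| | r i \in G) bias i.+1.
Definition Yavg (T : finType) (G : {set T}) (y : T -> R) : R :=
  (#|G|%:R)^-1 * \sum_(d in G) y d.
Definition CTR (T : finType) (G : {set T}) (y : T -> R) (r : ranking T) : R :=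
  (#|G|%:R)^-1 * \sum_(i : 'I_#|T| | r i \in G) bias i.+1 * y (r i).

Definition metric :=
  forall T : finType, (T -> bool) -> (T -> R) -> ranking T -> R.

Definition ED : metric := fun T g y r =>
  Exposure (G1 g) r - Exposure (G0 g) r.
Definition ER : metric := fun T g y r =>
  Exposure (G1 g) r / Exposure (G0 g) r.
Definition DTD : metric := fun T g y r =>
  Exposure (G1 g) r / Yavg (G1 g) y - Exposure (G0 g) r / Yavg (G0 g) y.
Definition DTR : metric := fun T g y r =>
  (Exposure (G1 g) r / Exposure (G0 g) r) * (Yavg (G0 g) y / Yavg (G1 g) y).
Definition DID : metric := fun T g y r =>
  CTR (G1 g) y r / Yavg (G1 g) y - CTR (G0 g) y r / Yavg (G0 g) y.
Definition DIR : metric := fun T g y r =>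
  (CTR (G1 g) y r / CTR (G0 g) y r) * (Yavg (G0 g) y / Yavg (G1 g) y).

Definition expected_random (m : metric) (T : finType) (g : T -> bool)
  (y : T -> R) : R :=
  (#|[set r : ranking T | is_ranking r]|%:R)^-1 *
  \sum_(r : ranking T | is_ranking r) m T g y r.

Definition optimal_random (m : metric) (vopt : R) : Prop :=
  forall (T : finType) (g : T -> bool),
    (exists d, ~~ g d) -> (exists d, g d) ->
    expected_random m g (fun _ => 1) = vopt.

End Fairness.

(* Main.v *)
Require Import Defs.
From HB Require Import structures.
From mathcomp Require Import all_boot all_order all_algebra perm.
From mathcomp Require Import reals exp.
From mathcomp Require Import ring lra.
Set Implicit Arguments. Unset Strict Implicit. Unset Printing Implicit Defensive.
Import Order.TTheory GRing.Theory Num.Theory.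
Local Open Scope ring_scope.

Section P.
Variable R : realType.

Definition Ncnt (T : finType) (i : 'I_#|T|) (d : T) : R :=
  \sum_(r : ranking T | is_ranking r) ((r i == d)%:R : R).

Lemma Ncnt_const (T : finType) (i : 'I_#|T|) (d d' : T) :
  Ncnt i d = Ncnt i d'.
Proof.
rewrite /Ncnt.
pose h (r : ranking T) : ranking T := [ffun j => tperm d d' (r j)].
have hK : involutive h by move=> r; apply/ffunP => j; rewrite !ffunE tpermK.
rewrite (reindex_inj (inv_inj hK)).
apply: eq_big => r.
  rewrite /is_ranking; apply/injectiveP/injectiveP => Hr x y.
    by move=> E; apply: Hr; rewrite /h !ffunE E.
  by move=> E; apply: Hr; move: E; rewrite /h !ffunE; exact: perm_inj.
move=> _; rewrite /h ffunE.
have -> : (tperm d d' (r i) == d) = (r i == d') by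
  rewrite -{2}(tpermR d d'); apply/idP/idP => /eqP H; apply/eqP; [exact: (perm_inj H) | by rewrite H].
by [].
Qed.

Lemma sum_in (T : finType) (G : {set T}) (x : T) :
  \sum_(d in G) ((x == d)%:R : R) = (x \in G)%:R.
Proof.
case: (boolP (x \in G)) => Hx.
  rewrite (bigD1 x) //= eqxx big1 ?addr0 // => d /andP[_ Hd].
  by rewrite eq_sym (negbTE Hd).
rewrite big1 // => d Hd; case: eqP => // E; by rewrite E Hd in Hx.
Qed.

Lemma sum_exposure (T : finType) (G : {set T}) (d0 : T) : (0 < #|G|)%N ->
  \sum_(r : ranking T | is_ranking r) Exposure R G r =
  \sum_(i : 'I_#|T|) bias R i.+1 * Ncnt i d0.
Proof.
move=> HG.
rewrite /Exposure -mulr_sumr.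
under eq_bigr do rewrite big_mkcond /=.
rewrite exchange_big /= mulr_sumr; apply: eq_bigr => i _.
have -> : \sum_(r : ranking T | is_ranking r)
    (if r i \in G then bias R i.+1 else 0) =
   bias R i.+1 * \sum_(d in G) Ncnt i d.
  rewrite /Ncnt exchange_big /= mulr_sumr; apply: eq_bigr => r _.
  by rewrite sum_in; case: (r i \in G); rewrite ?mulr1 ?mulr0.
under eq_bigr do rewrite (Ncnt_const i _ d0).
rewrite sumr_const -mulr_natr.
have HG' : (#|G|%:R : R) != 0 by rewrite pnatr_eq0 -lt0n.
by field.
Qed.


Lemma card_pos (T : finType) (g : T -> bool) b :
  (exists d, g d = b) -> (0 < #|[set d | g d == b]|)%N.
Proof. by case=> d Hd; apply/card_gt0P; exists d; rewrite inE Hd. Qed.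

Lemma G1pos (T : finType) (g : T -> bool) : (exists d, g d) -> (0 < #|G1 g|)%N.
Proof. by case=> d Hd; apply/card_gt0P; exists d; rewrite inE. Qed.
Lemma G0pos (T : finType) (g : T -> bool) : (exists d, ~~ g d) -> (0 < #|G0 g|)%N.
Proof. by case=> d Hd; apply/card_gt0P; exists d; rewrite inE. Qed.

Lemma Yavg1 (T : finType) (G : {set T}) : (0 < #|G|)%N -> Yavg G (fun _ => 1 : R) = 1.
Proof.
move=> HG; rewrite /Yavg sumr_const -mulr_natl mulr1.
by rewrite mulVf // pnatr_eq0 -lt0n.
Qed.

Lemma CTR1 (T : finType) (G : {set T}) r : CTR G (fun _ => 1 : R) r = Exposure R G r.
Proof. by rewrite /CTR /Exposure; under eq_bigr do rewrite mulr1. Qed.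

Lemma exp_ext (m1 m2 : metric R) (T : finType) g y :
  (forall r, m1 T g y r = m2 T g y r) -> expected_random m1 g y = expected_random m2 g y.
Proof. by move=> H; rewrite /expected_random; under eq_bigr do rewrite H. Qed.

Lemma ED_opt : optimal_random (@ED R) 0.
Proof.
move=> T g H0 H1; case: (H1) => d0 _.
rewrite /expected_random /ED sumrB (sum_exposure d0 (G1pos H1)).
by rewrite (sum_exposure d0 (G0pos H0)) subrr mulr0.
Qed.

Lemma DTD_opt : optimal_random (@DTD R) 0.
Proof.
move=> T g H0 H1; rewrite -(ED_opt H0 H1); apply: exp_ext => r.
by rewrite /DTD /ED !Yavg1 ?G1pos ?G0pos // !divr1.
Qed.

Lemma DID_opt : optimal_random (@DID R) 0.
Proof.
move=> T g H0 H1; rewrite -(ED_opt H0 H1); apply: exp_ext => r.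
by rewrite /DID /ED !Yavg1 ?G1pos ?G0pos // !divr1 !CTR1.
Qed.


Lemma DTR_ER (T : finType) (g : T -> bool) :
  (exists d, ~~ g d) -> (exists d, g d) ->
  expected_random (@DTR R) g (fun _ => 1) = expected_random (@ER R) g (fun _ => 1).
Proof.
move=> H0 H1; apply: exp_ext => r.
by rewrite /DTR /ER !Yavg1 ?G1pos ?G0pos // divr1 mulr1.
Qed.

Lemma DIR_ER (T : finType) (g : T -> bool) :
  (exists d, ~~ g d) -> (exists d, g d) ->
  expected_random (@DIR R) g (fun _ => 1) = expected_random (@ER R) g (fun _ => 1).
Proof.
move=> H0 H1; apply: exp_ext => r.
by rewrite /DIR /ER !Yavg1 ?G1pos ?G0pos // divr1 mulr1 !CTR1.
Qed.

Definition rk (b : bool) : ranking bool := [ffun i : 'I_#|{: bool}| => (val i == 0%N) == b].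

Lemma ord2 (i : 'I_#|{: bool}|) : val i = 0%N \/ val i = 1%N.
Proof. have : (val i < 2)%N by rewrite -[2%N]card_bool; exact: ltn_ord. by case: (val i) => [|[|]]; auto. Qed.

Lemma rk_inj b : is_ranking (rk b).
Proof.
apply/injectiveP => i j; rewrite !ffunE => E; apply: val_inj.
by case: (ord2 i) (ord2 j) E => -> [] ->; case: b.
Qed.

Lemma rank_cases (r : ranking bool) : is_ranking r = (r == rk true) || (r == rk false).
Proof.
apply/idP/idP; last by case/orP => /eqP ->; apply: rk_inj.
move/injectiveP => Hr.
have h0 : (0 < #|{: bool}|)%N by rewrite card_bool.
have h1 : (1 < #|{: bool}|)%N by rewrite card_bool.
pose i0 := Ordinal h0; pose i1 := Ordinal h1.
have Hne : r i0 != r i1 by apply/eqP => /Hr.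
have key : r = rk (r i0).
  apply/ffunP => i; rewrite ffunE.
  case: (ord2 i) => Hi.
    by rewrite Hi eqxx; congr (r _); apply: val_inj.
  rewrite Hi /=; have -> : i = i1 by apply: val_inj.
  by move: Hne; case: (r i0); case: (r i1).
by rewrite key; case: (r i0); rewrite eqxx ?orbT.
Qed.

Lemma rk_ne : rk true != rk false.
Proof.
have h0 : (0 < #|{: bool}|)%N by rewrite card_bool.
apply/eqP => /ffunP /(_ (Ordinal h0)); rewrite !ffunE /=. by [].
Qed.

Lemma sum_rankings (F : ranking bool -> R) :
  \sum_(r | is_ranking r) F r = F (rk true) + F (rk false).
Proof.
rewrite (eq_bigl _ _ rank_cases) (bigD1 (rk true)) ?eqxx //=.
rewrite (big_pred1 (rk false)) // => r /=.
case: eqP => [->|_]; first by rewrite (negbTE rk_ne).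
by rewrite andbT.
Qed.

Lemma card_rankings : #|[set r : ranking bool | is_ranking r]| = 2%N.
Proof.
have -> : 2%N = #|[set rk true; rk false]| by rewrite cards2 rk_ne.
apply: eq_card => r.
by rewrite !inE rank_cases.
Qed.

Lemma sum_bool_pos (P : pred nat) :
  \sum_(i : 'I_#|{: bool}| | P i) bias R i.+1 =
  (if P 0%N then bias R 1 else 0) + (if P 1%N then bias R 2 else 0).
Proof.
rewrite -(big_mkord P (fun k => bias R k.+1)) card_bool big_mkcond.
by rewrite big_nat_recl // big_nat1.
Qed.


Lemma cardG1 : #|G1 (fun x : bool => x)| = 1%N.
Proof.
rewrite -(cards1 true); apply: eq_card => x; rewrite !inE; by case: x.
Qed.
Lemma cardG0 : #|G0 (fun x : bool => x)| = 1%N.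
Proof.
rewrite -(cards1 false); apply: eq_card => x; rewrite !inE; by case: x.
Qed.

Lemma E1rk b : Exposure R (G1 (fun x : bool => x)) (rk b) = if b then bias R 1 else bias R 2.
Proof.
rewrite /Exposure cardG1 invr1 mul1r.
rewrite (eq_bigl (fun i : 'I_#|{: bool}| => (fun k => (k == 0%N) == b) (nat_of_ord i))); last first.
  by move=> i; rewrite ffunE inE.
by apply: etrans (sum_bool_pos (fun k => (k == 0%N) == b)) _; case: b; rewrite /= ?addr0 ?add0r.
Qed.

Lemma E0rk b : Exposure R (G0 (fun x : bool => x)) (rk b) = if b then bias R 2 else bias R 1.
Proof.
rewrite /Exposure cardG0 invr1 mul1r.
rewrite (eq_bigl (fun i : 'I_#|{: bool}| => (fun k => ~~ ((k == 0%N) == b)) (nat_of_ord i))); last first.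
  by move=> i; rewrite ffunE inE.
by apply: etrans (sum_bool_pos (fun k => ~~ ((k == 0%N) == b))) _; case: b; rewrite /= ?addr0 ?add0r.
Qed.

Lemma ln2_gt0 : 0 < ln (2 : R).
Proof. by apply: ln_gt0; rewrite ltr1n. Qed.

Lemma ln23 : ln (2 : R) < ln 3.
Proof. by rewrite ltr_ln ?posrE // ltr_nat. Qed.

Lemma bias1 : bias R 1 = 1.
Proof. rewrite /bias /log2 divff ?divr1 //; exact: lt0r_neq0 ln2_gt0. Qed.

Lemma bias2 : bias R 2 = ln 2 / ln 3.
Proof. by rewrite /bias /log2 div1r invf_div. Qed.

Lemma ER_not : expected_random (@ER R) (fun x : bool => x) (fun _ => 1) != 1.
Proof.
rewrite /expected_random card_rankings sum_rankings /ER !E1rk !E0rk bias1 bias2.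
have h2 := ln2_gt0; have h3 := ln23.
set x := ln (2:R) / ln 3.
have x0 : 0 < x by rewrite divr_gt0 //; lra.
have x1 : x < 1 by rewrite ltr_pdivrMr; lra.
apply/eqP => H.
have xy : x * x^-1 = 1 by rewrite mulfV // lt0r_neq0.
rewrite divr1 div1r in H.
nra.
Qed.

End P.

Theorem theorem7 (R : realType) :
  (optimal_random (@ED R) 0 /\ optimal_random (@DTD R) 0 /\
   optimal_random (@DID R) 0) /\
  (~ optimal_random (@ER R) 1 /\ ~ optimal_random (@DTR R) 1 /\
   ~ optimal_random (@DIR R) 1).
Proof.
have H0 : exists d : bool, ~~ (fun x : bool => x) d by exists false.
have H1 : exists d : bool, (fun x : bool => x) d by exists true.
split; first by split; [exact: ED_opt | split; [exact: DTD_opt | exact: DID_opt]].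
split; [|split]; move=> H; have := H _ _ H0 H1.
- by apply/eqP; exact: ER_not.
- by rewrite DTR_ER //; apply/eqP; exact: ER_not.
- by rewrite DIR_ER //; apply/eqP; exact: ER_not.
Qed.
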